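(* Let $(S,E,f)$ be a reduced and closed observation table for $U$ and $D$ as defined below, let $\alpha\in S\cdot E$, and let $w\in\Sigma^*$ be a prefix of $\alpha$ with $\alpha=w\alpha'$. Let $r=\delta_f^*(\epsilon,w)$. Then $\alpha\in U$ if and only if $r\alpha'\in U$.
   Context: $\Sigma$ is a finite alphabet, $U\subseteq\Sigma^\omega$ an $\omega$-language recognizable by a weak deterministic Büchi automaton, and $D\subseteq\Sigma^\omega$ a regular set with trivial right-congruence (for all $w\in\Sigma^*,\alpha$: $\alpha\in D\iff w\alpha\in D$). An observation table $(S,E,f)$ consists of a prefix-closed finite $S\subseteq\Sigma^*$, a suffix-closed finite set $E$ of ultimately periodic words with $E\cap D=\emptyset$, and $f:(S\cup S\Sigma)\times E\to\{\text{yes},\text{no}\}$ with $f(s,\alpha)=\text{yes}$ iff $s\alpha\in U$. For $s\in S\cup S\Sigma$ let $f_s(\alpha)=f(s,\alpha)$. The table is reduced if $f_s\neq f_t$ for distinct $s,t\in S$, and closed if for every $s\in S\Sigma$ there is $t\in S$ with $f_s=f_t$. For a reduced closed table, $\mathcal{T}_{S,f}=(\Sigma,S,\delta_f,\epsilon)$ with $\delta_f(s,\sigma)$ the unique $t\in S$ with $f_{s\sigma}=f_t$, and $\delta_f^*$ the extension of $\delta_f$ to finite words. *)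

(* Defs.v *)
From Stdlib Require Import List.
From mathcomp Require Import all_boot.
Set Implicit Arguments. Unset Strict Implicit. Unset Printing Implicit Defensive.

Section Defs.
Variable Sigma : finType.

Definition oword := nat -> Sigma.

Definition ocat (w : seq Sigma) (a : oword) : oword :=
  fun n => if n < size w then nth (a 0) w n else a (n - size w).

(* v^omega for nonempty v *)
Definition oomega (v : seq Sigma) (x0 : Sigma) : oword :=
  fun n => nth x0 v (n %% size v).

Definition ultimately_periodic (a : oword) : Prop :=
  exists (u v : seq Sigma) (x0 : Sigma), 0 < size v /\
    forall n, a n = ocat u (oomega v x0) n.

Definition inf_often (Q : Type) (F : Q -> bool) (r : nat -> Q) : Prop :=
  forall N, exists n, N <= n /\ F (r n).

Fixpoint drun (Q : Type) (d : Q -> Sigma -> Q) (q0 : Q) (a : oword) (n : nat) : Q :=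
  match n with
  | 0 => q0
  | n'.+1 => d (drun d q0 a n') (a n')
  end.

Definition dba_accepts (Q : Type) (d : Q -> Sigma -> Q) (q0 : Q) (F : Q -> bool)
  (a : oword) : Prop := inf_often F (drun d q0 a).

(* weak: every strongly connected component is entirely accepting or
   entirely rejecting *)
Definition dba_weak (Q : finType) (d : Q -> Sigma -> Q) (F : pred Q) : Prop :=
  let e := [rel q q' | [exists s : Sigma, d q s == q']] in
  forall q q', connect e q q' -> connect e q' q -> F q = F q'.

Definition wdba_recognizable (U : oword -> Prop) : Prop :=
  exists (Q : finType) (q0 : Q) (d : Q -> Sigma -> Q) (F : pred Q),
    dba_weak d F /\ forall a, U a <-> dba_accepts d q0 F a.

Definition nba_accepts (Q : finType) (I : pred Q) (d : Q -> Sigma -> Q -> bool)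
  (F : pred Q) (a : oword) : Prop :=
  exists r : nat -> Q, I (r 0) /\ (forall n, d (r n) (a n) (r n.+1)) /\ inf_often F r.

Definition omega_regular (L : oword -> Prop) : Prop :=
  exists (Q : finType) (I : pred Q) (d : Q -> Sigma -> Q -> bool) (F : pred Q),
    forall a, L a <-> nba_accepts I d F a.

Definition trivial_right_congruence (L : oword -> Prop) : Prop :=
  forall (w : seq Sigma) (a : oword), L a <-> L (ocat w a).

Definition prefix_closed (S : seq (seq Sigma)) : Prop :=
  forall s, s \in S -> forall n, take n s \in S.

Definition suffix_closed (E : seq oword) : Prop :=
  forall e, List.In e E -> forall n, exists e', List.In e' E /\ forall m, e' m = e (n + m).

Definition in_SSigma (S : seq (seq Sigma)) (s : seq Sigma) : Prop :=
  s \in S \/ exists t, exists c : Sigma, t \in S /\ s = rcons t c.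

Definition row_eq (E : seq oword) (f : seq Sigma -> oword -> bool) (s t : seq Sigma) : bool :=
  all (fun e => f s e == f t e) E.

Definition observation_table (U D : oword -> Prop) (S : seq (seq Sigma)) (E : seq oword)
  (f : seq Sigma -> oword -> bool) : Prop :=
  [/\ prefix_closed S, suffix_closed E,
      (forall e, List.In e E -> ultimately_periodic e),
      (forall e, List.In e E -> ~ D e) &
      (forall s e, in_SSigma S s -> List.In e E -> (f s e <-> U (ocat s e)))].

Definition table_reduced (S : seq (seq Sigma)) (E : seq oword) (f : seq Sigma -> oword -> bool) : Prop :=
  forall s t, s \in S -> t \in S -> s != t -> ~~ row_eq E f s t.

Definition table_closed (S : seq (seq Sigma)) (E : seq oword) (f : seq Sigma -> oword -> bool) : Prop :=
  forall s (c : Sigma), s \in S -> exists2 t, t \in S & row_eq E f (rcons s c) t.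

(* delta_f(s, c) = the t in S with f_{sc} = f_t (unique when the table is
   reduced and closed; we pick the first such t in the list S). *)
Definition delta_f (S : seq (seq Sigma)) (E : seq oword) (f : seq Sigma -> oword -> bool)
  (s : seq Sigma) (c : Sigma) : seq Sigma :=
  nth [::] S (find (fun t => row_eq E f (rcons s c) t) S).

Definition delta_f_star (S : seq (seq Sigma)) (E : seq oword) (f : seq Sigma -> oword -> bool)
  (q : seq Sigma) (w : seq Sigma) : seq Sigma :=
  foldl (delta_f S E f) q w.

End Defs.

(* Main.v *)
Require Import Defs.
From Stdlib Require Import List.
From mathcomp Require Import all_boot.
From mathcomp Require Import zify.

Lemma ocat_ext (Sigma : finType) (w : seq Sigma) (a b : oword Sigma) :
  (forall n, a n = b n) -> forall n, ocat w a n = ocat w b n.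
Proof.
move=> H n; rewrite /ocat; case: ifP => h; last by rewrite H.
by apply: set_nth_default.
Qed.

Lemma ocat_cat (Sigma : finType) (x y : seq Sigma) (b : oword Sigma) n :
  ocat (x ++ y) b n = ocat x (ocat y b) n.
Proof.
rewrite /ocat size_cat nth_cat.
case: (ltnP n (size x)) => h1.
  rewrite (_ : n < size x + size y); last by lia.
  by apply: set_nth_default.
case: ifP => h2.
  by rewrite (_ : n - size x < size y); last by lia.
rewrite (_ : n - size x < size y = false); last by lia.
by rewrite subnDA.
Qed.

Lemma ocat_drop (Sigma : finType) (v : seq Sigma) (b : oword Sigma) k m :
  k <= size v -> ocat (drop k v) b m = ocat v b (k + m).
Proof.
move=> hk; rewrite /ocat size_drop nth_drop.
case: ifP => h.
  rewrite (_ : k + m < size v); last by lia.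
  by apply: set_nth_default; lia.
rewrite (_ : k + m < size v = false); last by lia.
congr b; lia.
Qed.

Lemma ocat_shift (Sigma : finType) (s : seq Sigma) (b : oword Sigma) m :
  ocat s b (size s + m) = b m.
Proof.
rewrite /ocat (_ : size s + m < size s = false); last by lia.
congr b; lia.
Qed.

Lemma all_In (T : Type) (p : pred T) (l : seq T) x :
  all p l -> List.In x l -> p x.
Proof.
elim: l => [|y l IH] //= /andP [py pl] [<-|h]; first by [].
exact: IH.
Qed.

Lemma U_ext (Sigma : finType) (U : oword Sigma -> Prop) :
  wdba_recognizable U -> forall a b, (forall n, a n = b n) -> (U a <-> U b).
Proof.
move=> [Q [q0 [d [F [_ HUa]]]]] a b Hab.
rewrite !HUa /dba_accepts.
have E : forall n, drun d q0 a n = drun d q0 b n.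
  by elim=> [|n IH] //=; rewrite IH Hab.
split=> H N; case: (H N) => n [h1 h2]; exists n; split=> //.
  by rewrite -E.
by rewrite E.
Qed.

Lemma delta_spec (Sigma : finType) (S : seq (seq Sigma)) E f q c :
  table_closed S E f -> q \in S ->
  delta_f S E f q c \in S /\ row_eq E f (rcons q c) (delta_f S E f q c).
Proof.
move=> Hclo qS; case: (Hclo q c qS) => t tS rt.
have hs : has (fun t => row_eq E f (rcons q c) t) S.
  by apply/hasP; exists t.
split; first by rewrite /delta_f mem_nth // -has_find.
exact: (nth_find [::] hs).
Qed.

Lemma row_eq_refl (Sigma : finType) E (f : seq Sigma -> oword Sigma -> bool) s :
  row_eq E f s s.
Proof. by rewrite /row_eq; elim: E => //= e E ->; rewrite eqxx. Qed.

Lemma delta_in (Sigma : finType) (S : seq (seq Sigma)) E f q c :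
  table_reduced S E f -> rcons q c \in S -> delta_f S E f q c = rcons q c.
Proof.
move=> Hred h.
have hs : has (fun t => row_eq E f (rcons q c) t) S.
  by apply/hasP; exists (rcons q c) => //; exact: row_eq_refl.
have tS : delta_f S E f q c \in S by rewrite /delta_f mem_nth // -has_find.
have rt := nth_find [::] hs.
apply/eqP; apply/negPn/negP => hne.
have := Hred _ _ h tS; rewrite eq_sym hne => /(_ isT).
by rewrite rt.
Qed.

Lemma star_in (Sigma : finType) (S : seq (seq Sigma)) E f :
  prefix_closed S -> table_reduced S E f ->
  forall x, x \in S -> delta_f_star S E f [::] x = x.
Proof.
move=> Hpre Hred; elim/last_ind => [|y c IH] // h.
rewrite /delta_f_star foldl_rcons -/(delta_f_star S E f [::] y).
have yS : y \in S.
  by have := Hpre _ h (size y); rewrite -cats1 take_size_cat.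
by rewrite IH // delta_in.
Qed.

Theorem lemma6 (Sigma : finType) (U D : oword Sigma -> Prop)
  (HU : wdba_recognizable U) (HDreg : omega_regular D)
  (HDtriv : trivial_right_congruence D)
  (S : seq (seq Sigma)) (E : seq (oword Sigma)) (f : seq Sigma -> oword Sigma -> bool)
  (Htab : observation_table U D S E f)
  (Hred : table_reduced S E f) (Hclo : table_closed S E f)
  (alpha : oword Sigma)
  (HSE : exists s e, s \in S /\ List.In e E /\ forall n, alpha n = ocat s e n)
  (w : seq Sigma) (alpha' : oword Sigma)
  (Hw : forall n, alpha n = ocat w alpha' n) :
  U alpha <-> U (ocat (delta_f_star S E f [::] w) alpha').
Proof.
case: Htab => Hpre Hsuf _ _ Hf.
have Ue := @U_ext _ _ HU.
case: HSE => s [e [sS [eE Hs]]].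
have Hsw : forall n, ocat s e n = ocat w alpha' n by move=> n; rewrite -Hs Hw.
have nthE : forall n, n < size s -> n < size w -> nth (e 0) s n = nth (alpha' 0) w n.
  by move=> n h1 h2; have := Hsw n; rewrite /ocat h1 h2.
case: (leqP (size w) (size s)) => hws.
  have hwt : w = take (size w) s.
    apply: (@eq_from_nth _ (e 0)); first by rewrite size_takel.
    move=> i hi; rewrite nth_take // nthE //; last by lia.
    by apply: set_nth_default.
  have wS : w \in S by rewrite hwt; exact: Hpre.
  rewrite star_in //.
  exact: Ue.
set v := drop (size s) w.
have hw : w = s ++ v.
  rewrite -[LHS](cat_take_drop (size s)); congr (_ ++ _).
  apply: (@eq_from_nth _ (e 0)); first by rewrite size_takel //; lia.
  move=> i hi; rewrite size_takel in hi; last by lia.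
  rewrite nth_take // nthE //; last by lia.
  by apply: set_nth_default; lia.
have He : forall m, e m = ocat v alpha' m.
  move=> m; have := Hsw (size s + m).
  by rewrite hw ocat_cat !ocat_shift.
have Hv : forall k, k <= size v -> exists e', List.In e' E /\ forall m, e' m = ocat (drop k v) alpha' m.
  move=> k hk; case: (Hsuf e eE k) => e' [e'E He'].
  by exists e'; split => // m; rewrite He' He ocat_drop.
have Ha : forall n, alpha n = ocat (s ++ v) alpha' n by move=> n; rewrite Hw hw.
rewrite (Ue _ _ Ha) hw /delta_f_star foldl_cat -/(delta_f_star S E f [::] s).
rewrite star_in //.
clear He Ha hw hws nthE Hsw Hs; clearbody v.
elim: v s sS Hv => [|c v IH] q qS Hv; first by rewrite cats0.
have [tS rt] := @delta_spec _ S E f q c Hclo qS.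
rewrite /=.
have Hv' : forall k, k <= size v -> exists e', List.In e' E /\ forall m, e' m = ocat (drop k v) alpha' m.
  by move=> k hk; have := Hv k.+1; rewrite /=; apply; lia.
rewrite -(IH _ tS Hv').
have [e' [e'E He']] := Hv 1 isT.
rewrite drop1 /= in He'.
have e1 : forall n, ocat (q ++ c :: v) alpha' n = ocat (rcons q c) e' n.
  by move=> n; rewrite -cats1 -(cat1s c v) catA ocat_cat; apply: ocat_ext => m; rewrite He'.
have e2 : forall n, ocat (delta_f S E f q c ++ v) alpha' n = ocat (delta_f S E f q c) e' n.
  by move=> n; rewrite ocat_cat; apply: ocat_ext => m; rewrite He'.
rewrite (Ue _ _ e1) (Ue _ _ e2).
have := @all_In _ _ _ _ rt e'E => /eqP feq.
rewrite -(Hf _ _ _ e'E); last by right; exists q, c.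
rewrite -(Hf _ _ _ e'E); last by left.
by rewrite feq.
Qed.
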